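(* There exist infinitely many EPS-graphs.
   Context: All graphs are finite and simple. $\mathcal{C}$ is the family of complete graphs; $\iota(J)$ is the family of graphs isomorphic to induced subgraphs of $J$; $\mathcal{F}_1\vee\mathcal{F}_2$ (resp. $\mathcal{F}_1\wedge\mathcal{F}_2$) is the family of disjoint unions (resp. joins) of a graph in $\mathcal{F}_1$ and a graph in $\mathcal{F}_2$; $S_2$ is the edgeless graph on $2$ vertices, $K_2$ an edge. $\mathcal{C}^+$ is the family of graphs $G$ that are complete or such that $G\setminus v$ is complete for some $v\in V(G)$ with $\deg(v)\le1$. For a positive integer $l$, a graph $H$ is an $l$-EPS-graph if: (EPS1) for every $1\le s\le l$, $V(H)$ can be partitioned into $s$ stable sets and $l-s$ cliques; (EPS2) for each $\mathcal{G}\in\{\iota(S_2)\vee\mathcal{C},\iota(K_2)\vee\mathcal{C},\iota(S_2)\wedge\mathcal{C},\mathcal{C}^+\}$, $V(H)$ can be partitioned into $l-1$ cliques and a set inducing a graph in $\mathcal{G}$; (EPS3) there is no partition $(X_1,\dots,X_l)$ of $V(H)$ such that $H[X_1]$ is a clique or the complement of a star $K_{1,m}$, and $X_i$ is a clique for $2\le i\le l$. An EPS-graph is an $l$-EPS-graph for some positive integer $l$. *)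

(* Defs.v *)
From mathcomp Require Import all_boot.
Set Implicit Arguments. Unset Strict Implicit. Unset Printing Implicit Defensive.

Section EPS.
Variables (T : finType) (e : rel T).

Definition simple_graph : Prop := symmetric e /\ irreflexive e.

Definition stableS (S : {set T}) : Prop :=
  forall x y, x \in S -> y \in S -> ~~ e x y.

Definition cliqueS (S : {set T}) : Prop :=
  forall x y, x \in S -> y \in S -> x != y -> e x y.

(* the i-th part of a partition given as a function into 'I_l
   (parts may be empty) *)
Definition part l (f : T -> 'I_l) (i : 'I_l) : {set T} := [set x | f x == i].

(* X induces a graph in iota(S_2) \/ C : disjoint union of an edgeless graph
   on at most 2 vertices and a complete graph *)
Definition in_S2_or_C (X : {set T}) : Prop :=
  exists A B : {set T}, [/\ X = A :|: B, [disjoint A & B],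
    stableS A /\ #|A| <= 2, cliqueS B &
    forall x y, x \in A -> y \in B -> ~~ e x y].

Definition in_K2_or_C (X : {set T}) : Prop :=
  exists A B : {set T}, [/\ X = A :|: B, [disjoint A & B],
    cliqueS A /\ #|A| <= 2, cliqueS B &
    forall x y, x \in A -> y \in B -> ~~ e x y].

Definition in_S2_join_C (X : {set T}) : Prop :=
  exists A B : {set T}, [/\ X = A :|: B, [disjoint A & B],
    stableS A /\ #|A| <= 2, cliqueS B &
    forall x y, x \in A -> y \in B -> e x y].

Definition in_Cplus (X : {set T}) : Prop :=
  cliqueS X \/
  exists v, [/\ v \in X, cliqueS (X :\ v) & #|[set y in X | e v y]| <= 1].

(* X induces the complement of a star K_{1,m}: an isolated vertex plus
   a complete graph on the remaining vertices *)
Definition co_star (X : {set T}) : Prop :=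
  exists v, [/\ v \in X, cliqueS (X :\ v) & forall y, y \in X -> ~~ e v y].

Definition EPS1 (l : nat) : Prop :=
  forall s, 1 <= s <= l -> exists f : T -> 'I_l,
    forall i : 'I_l, (i < s -> stableS (part f i)) /\ (s <= i -> cliqueS (part f i)).

Definition cliques_plus (l : nat) (P : {set T} -> Prop) : Prop :=
  exists f : T -> 'I_l, forall i : 'I_l,
    (i == 0 :> nat -> P (part f i)) /\ (0 < i -> cliqueS (part f i)).

Definition EPS2 (l : nat) : Prop :=
  [/\ cliques_plus l in_S2_or_C, cliques_plus l in_K2_or_C,
      cliques_plus l in_S2_join_C & cliques_plus l in_Cplus].

Definition EPS3 (l : nat) : Prop :=
  ~ cliques_plus l (fun X => cliqueS X \/ co_star X).

Definition l_EPS_graph (l : nat) : Prop := [/\ 0 < l, EPS1 l, EPS2 l & EPS3 l].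

Definition EPS_graph : Prop := exists l, l_EPS_graph l.

End EPS.

(* Main.v *)
Require Import Defs.
From mathcomp Require Import all_boot.
From mathcomp Require Import zify.
Set Implicit Arguments. Unset Strict Implicit. Unset Printing Implicit Defensive.

Section Constr.
Variable k : nat.
Definition nV := (8 + k.*2).+1.
Definition isT (v : nat) := (7 <= v) && (v < 9 + k).
Definition isX (v : nat) := 9 + k <= v.
Definition elist : seq (nat * nat) :=
  [:: (0,1); (0,3); (0,4); (0,5); (1,5); (1,6); (5,6); (3,4); (2,3)].
Definition bedge (x y : nat) : bool := (maxn x y < 7) && ((minn x y, maxn x y) \in elist).
Definition E (x y : nat) : bool :=
  [|| bedge x y, isT x && ((y < 3) || isX y) | isT y && ((x < 3) || isX x)].
Definition eG : rel 'I_nV := fun x y => E x y.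

Lemma bedge_sym x y : bedge x y = bedge y x.
Proof. by rewrite /bedge minnC maxnC. Qed.
Lemma bedge_r x y : 7 <= y -> bedge x y = false.
Proof. move=> h; rewrite /bedge ltnNge. have -> : 7 <= maxn x y by lia. by []. Qed.
Lemma bedge_l x y : 7 <= x -> bedge x y = false.
Proof. by move=> h; rewrite bedge_sym bedge_r. Qed.
Lemma E_sym x y : E x y = E y x.
Proof. rewrite /E bedge_sym; case: (bedge y x) => //=; by rewrite orbC. Qed.
Lemma E_irr x : E x x = false.
Proof.
rewrite /E /bedge minnn maxnn orbb.
case: (ltnP x 7) => h.
  have -> : isT x = false by rewrite /isT; lia.
  by do 7 (case: x h => [|x] h //).
rewrite andFb /=. apply/negbTE; rewrite negb_and; apply/orP.
case: (ltnP x (9 + k)) => h2.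
  right; rewrite negb_or /isX; apply/andP; split; lia.
left; rewrite /isT; lia.
Qed.
Lemma E_bb x y : x < 7 -> y < 7 -> E x y = bedge x y.
Proof. move=> hx hy; rewrite /E /isT. have -> : 7 <= x = false by lia. have -> : 7 <= y = false by lia. by rewrite !orbF. Qed.
Lemma E_TT x y : isT x -> isT y -> E x y = false.
Proof. rewrite /E /isT /isX => /andP[h1 h2] /andP[h3 h4]. rewrite bedge_l //.
have -> : y < 3 = false by lia. have -> : 9 + k <= y = false by lia.
have -> : x < 3 = false by lia. have -> : 9 + k <= x = false by lia. by rewrite !andbF. Qed.
Lemma E_XX x y : isX x -> isX y -> E x y = false.
Proof. rewrite /E /isT /isX => h1 h2. rewrite bedge_l; last lia.
have -> : y < 9 + k = false by lia. have -> : x < 9 + k = false by lia. by rewrite !andbF. Qed.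
Lemma E_TX x y : isT x -> isX y -> E x y.
Proof. move=> hx hy; by rewrite /E hx hy !orbT. Qed.
Lemma E_bT x y : x < 7 -> isT y -> E x y = (x < 3).
Proof. move=> h hy; rewrite /E bedge_r; last by case/andP: hy.
have -> : isT x = false by rewrite /isT; lia. have -> : isX x = false by rewrite /isX; lia.
by rewrite hy /= orbF. Qed.
Lemma E_bX x y : x < 7 -> isX y -> E x y = false.
Proof. rewrite /E /isT /isX => h h1. rewrite bedge_r; last lia.
have -> : 7 <= x = false by lia. have -> : y < 9 + k = false by lia. by rewrite /= !andbF. Qed.

Lemma simple_eG : simple_graph eG.
Proof. split; first by move=> x y; rewrite /eG E_sym. by move=> x; rewrite /eG E_irr. Qed.


Lemma ltV (v : 'I_nV) : v < 9 + k + k.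
Proof. case: v => w /=; rewrite /nV -addnn; lia. Qed.

Definition o (i : nat) : 'I_nV := inord i.
Lemma o_val i : i < nV -> val (o i) = i. Proof. by move=> h; apply: inordK. Qed.
Lemma o_nat i : i < nV -> nat_of_ord (o i) = i. Proof. by move=> h; apply: inordK. Qed.
Lemma eq_o (x : 'I_nV) i : i < nV -> (x == o i) = (val x == i).
Proof. move=> h; apply/eqP/eqP => [->|h2]; first exact: o_val. by apply: val_inj; rewrite /= o_val. Qed.

Definition pidx v := if v < 9 + k then v - 9 else v - (9 + k).
Definition tabF (tb : seq nat) v := if v < 9 then nth 0 tb v else (pidx v).+3.
Definition ftab tb (v : 'I_nV) : 'I_(k.+3) := inord (tabF tb v).
Definition small3 (tb : seq nat) := all (fun j => j < 3) tb.

Lemma nth_small tb v : small3 tb -> nth 0 tb v < 3.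
Proof.
move=> hall; case: (ltnP v (size tb)) => hs; last by rewrite nth_default.
by have /= := allP hall (nth 0 tb v) (mem_nth 0 hs).
Qed.

Lemma tabF_lt tb (v : 'I_nV) : small3 tb -> tabF tb v < k.+3.
Proof.
move=> hall; rewrite /tabF; case: ifP => h.
  have := nth_small v hall; lia.
have := ltV v. rewrite /pidx; case: ifP => h2; lia.
Qed.

Lemma in_tab tb (i : 'I_(k.+3)) (x : 'I_nV) : small3 tb ->
  (x \in part (ftab tb) i) = (tabF tb x == i).
Proof.
move=> hall; rewrite /part inE /ftab; apply/eqP/eqP => [<-|h].
  by rewrite inordK // tabF_lt.
by apply: val_inj; rewrite /= inordK ?h // tabF_lt.
Qed.

Lemma tab_high tb (i : 'I_(k.+3)) : small3 tb -> 3 <= i -> cliqueS eG (part (ftab tb) i).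
Proof.
move=> hall hi x y; rewrite !in_tab // => /eqP hx /eqP hy hxy.
have hne : (x : nat) <> y by move=> h; move/eqP: hxy; apply; apply: val_inj.
have hx9 : 9 <= x.
  move: hx; rewrite /tabF; case: ifP => g1 g2; last lia.
  by have := nth_small x hall; rewrite g2; lia.
have hy9 : 9 <= y.
  move: hy; rewrite /tabF; case: ifP => g1 g2; last lia.
  by have := nth_small y hall; rewrite g2; lia.
move: hx hy; rewrite /tabF /eG.
have -> : (x < 9) = false by lia.
have -> : (y < 9) = false by lia.
move=> hx hy; have hp : pidx x = pidx y by lia.
move: hp; rewrite /pidx.
case: (ltnP x (9 + k)) => h1; case: (ltnP y (9 + k)) => h2 hp.
- exfalso; apply: hne; lia.
- apply: E_TX; rewrite /isT /isX; lia.
- rewrite E_sym; apply: E_TX; rewrite /isT /isX; lia.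
- exfalso; apply: hne; lia.
Qed.

Lemma tab_low tb (i : 'I_(k.+3)) (x : 'I_nV) : small3 tb -> i < 3 ->
  x \in part (ftab tb) i -> (x < 9) /\ (nth 0 tb x = i).
Proof.
move=> hall hi; rewrite in_tab // /tabF; case: ifP => h /eqP hx //.
by rewrite -hx in hi.
Qed.

Definition chk tb (j : nat) (b : bool) :=
  all (fun x => all (fun y => [|| nth 0 tb x != j, nth 0 tb y != j, x == y | E x y == b])
    (iota 0 9)) (iota 0 9).

Lemma chkP tb j b x y : chk tb j b -> x < 9 -> y < 9 -> nth 0 tb x = j -> nth 0 tb y = j ->
  x <> y -> E x y = b.
Proof.
move=> /allP h hx hy hnx hny hne.
have := allP (h x _) y; rewrite !mem_iota /= hnx hny eqxx /=.
move=> /(_ hx hy). case: eqP => //= _ /eqP. done.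
Qed.

Definition tbS1 := [:: 1; 1; 2; 2; 0; 1; 0; 0; 0].
Definition tbS2 := [:: 2; 2; 0; 1; 0; 1; 0; 1; 2].
Definition tbA := [:: 1; 1; 2; 0; 0; 1; 0; 0; 2].
Definition tbB := [:: 1; 1; 2; 0; 0; 0; 0; 1; 2].
Definition tbC := [:: 1; 2; 0; 1; 1; 2; 2; 0; 0].
Definition tbD := [:: 0; 1; 2; 0; 0; 1; 1; 0; 2].

Lemma tab_clique tb (i : 'I_(k.+3)) : small3 tb -> i < 3 -> chk tb i true ->
  cliqueS eG (part (ftab tb) i).
Proof.
move=> hs hi hc x y hx hy hne.
have [hx1 hx2] := tab_low hs hi hx. have [hy1 hy2] := tab_low hs hi hy.
apply/idP; rewrite /eG; apply: (chkP hc) => // h; move/eqP: hne; apply; exact: val_inj.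
Qed.

Lemma tab_stable tb (i : 'I_(k.+3)) : small3 tb -> i < 3 -> chk tb i false ->
  stableS eG (part (ftab tb) i).
Proof.
move=> hs hi hc x y hx hy.
have [hx1 hx2] := tab_low hs hi hx. have [hy1 hy2] := tab_low hs hi hy.
rewrite /eG; case: (eqVneq (x : nat) y) => [->|hne]; first by rewrite E_irr.
by rewrite (chkP hc) //; apply/eqP.
Qed.

Lemma test1 : chk tbS1 0 false.
Proof. by []. Qed.

Lemma ord3 (i : 'I_(k.+3)) : [\/ (i : nat) = 0, (i : nat) = 1, (i : nat) = 2 | 3 <= i].
Proof.
case: i => [[|[|[|j]]] hj] /=; by [apply: Or41|apply: Or42|apply: Or43|apply: Or44].
Qed.

Ltac tabt h := first
  [ by apply: tab_high => //; lia
  | by apply: tab_stable; rewrite ?h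
  | by apply: tab_clique; rewrite ?h ].

Definition ctb9 := [:: 0; 1; 0; 2; 1; 2; 0; 2; 2].
Definition col v := if v < 9 then nth 0 ctb9 v else if v < 9 + k then 2 else 0.
Definition fcol (v : 'I_nV) : 'I_(k.+3) := inord (col v).
Lemma col_lt v : col v < 3.
Proof. rewrite /col; case: ifP => h; last by case: ifP.
by do 9 (case: v h => [|v] h //).
Qed.
Lemma in_col (i : 'I_(k.+3)) (x : 'I_nV) : (x \in part fcol i) = (col x == i).
Proof.
rewrite /part inE /fcol; have := col_lt x => hl.
apply/eqP/eqP => [<-|h]; first by rewrite inordK //; lia.
by apply: val_inj; rewrite /= inordK ?h //; lia.
Qed.
Lemma enum9 (P : nat -> Prop) : P 0 -> P 1 -> P 2 -> P 3 -> P 4 -> P 5 -> P 6 -> P 7 -> P 8 ->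
  forall v, v < 9 -> P v.
Proof. move=> ? ? ? ? ? ? ? ? ? v; by do 9 (case: v => [|v] //). Qed.

Lemma col_stable (i : 'I_(k.+3)) : stableS eG (part fcol i).
Proof.
move=> x y; rewrite !in_col => /eqP hx /eqP hy; rewrite /eG.
case: (eqVneq (x : nat) y) => [->|hne]; first by rewrite E_irr.
have cl9 : forall v, v < 9 -> col v = nth 0 ctb9 v by move=> v hv; rewrite /col hv.
have cg9 : forall v, 9 <= v -> col v = if v < 9 + k then 2 else 0.
  by move=> v hv; rewrite /col; have -> : v < 9 = false by lia.
have hxy : col x = col y by rewrite hx hy.
move: hxy hne; move: (nat_of_ord x) (nat_of_ord y) => {hx hy} a b.
wlog hab : a b / a <= b.
  move=> W h1 h2; case: (leqP a b) => h; first exact: W.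
  rewrite E_sym; apply: W; [lia|by []|by apply/eqP => e; move/eqP: h2; rewrite e].
move=> hc hne; apply/negbT.
case: (ltnP b 9) => hb.
  rewrite !cl9 in hc; try lia.
  have ha : a < 9 by lia.
  have hl := col_lt a; rewrite cl9 // in hl.
  case hv: (nth 0 ctb9 a) hl hc => [|[|[|j]]] // _ hc.
  - by apply: (@chkP ctb9 0 false a b) => //; by [rewrite -hc | apply/eqP].
  - by apply: (@chkP ctb9 1 false a b) => //; by [rewrite -hc | apply/eqP].
  - by apply: (@chkP ctb9 2 false a b) => //; by [rewrite -hc | apply/eqP].
case: (ltnP a 9) => ha.
  rewrite cl9 // cg9 // in hc.
  move: hc; case: ifP => hbk hc.
    have hbT : isT b by rewrite /isT; lia.
    move: a ha hc {hab hne}; apply: enum9 => /= /eqP hc //; first [ by rewrite E_bT | by rewrite E_TT ].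
  have hbX : isX b by rewrite /isX; lia.
  move: a ha hc {hab hne}; apply: enum9 => /= /eqP hc //; by rewrite E_bX.
rewrite !cg9 // in hc.
move: hc; case: ifP => h1; case: ifP => h2 // _.
  by apply: E_TT; rewrite /isT; lia.
by apply: E_XX; rewrite /isX; lia.
Qed.

Lemma col_high (i : 'I_(k.+3)) : 3 <= i -> cliqueS eG (part fcol i).
Proof. move=> hi x y; rewrite in_col => /eqP hx; have := col_lt x; lia. Qed.

Lemma eps1 : EPS1 eG (k.+3).
Proof.
move=> s /andP[hs1 hs2].
case: s hs1 hs2 => [//|[|[|s]]] _ hs.
- exists (ftab tbS1) => i; case: (ord3 i) => hi; split => hh; try (exfalso; lia); tabt hi.
- exists (ftab tbS2) => i; case: (ord3 i) => hi; split => hh; try (exfalso; lia); tabt hi.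
- exists fcol => i; split => hh; first exact: col_stable.
  apply: col_high; lia.
Qed.

Definition vs (s : seq nat) : {set 'I_nV} := [set x : 'I_nV | val x \in s].

Lemma part0_eq tb (i : 'I_(k.+3)) s0 : small3 tb -> (i : nat) = 0 ->
  all (fun v => (nth 0 tb v == 0) == (v \in s0)) (iota 0 9) -> all (fun v => v < 9) s0 ->
  part (ftab tb) i = vs s0.
Proof.
move=> hs hi hc hs0; apply/setP => x; rewrite in_tab // inE hi /tabF.
case: ifP => hx.
  have h := allP hc (val x); rewrite mem_iota add0n hx in h; by move/eqP: (h erefl).
apply/esym/negbTE/negP => hm; have := allP hs0 _ hm; rewrite hx.
done.
Qed.

Lemma vs_stable s : all (fun a => all (fun b => ~~ E a b) s) s -> stableS eG (vs s).
Proof. move=> h x y; rewrite !inE => hx hy; exact: (allP (allP h _ hx) _ hy). Qed.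
Lemma vs_clique s : all (fun a => all (fun b => (a == b) || E a b) s) s -> cliqueS eG (vs s).
Proof.
move=> h x y; rewrite !inE => hx hy hne; have /orP[/eqP e|//] := allP (allP h _ hx) _ hy.
by move/eqP: hne; case; apply: val_inj.
Qed.
Lemma vs_cross s1 s2 b : all (fun a => all (fun c => E a c == b) s2) s1 ->
  forall x y, x \in vs s1 -> y \in vs s2 -> eG x y = b.
Proof. move=> h x y; rewrite !inE => hx hy; apply/eqP; exact: (allP (allP h _ hx) _ hy). Qed.
Lemma vs_U s1 s2 : vs (s1 ++ s2) = vs s1 :|: vs s2.
Proof. by apply/setP => x; rewrite !inE mem_cat. Qed.
Lemma vs_disj s1 s2 : all (fun a => a \notin s2) s1 -> [disjoint vs s1 & vs s2].
Proof.
move=> h; rewrite disjoint_subset; apply/subsetP => x; rewrite !inE => hx.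
exact: (allP h _ hx).
Qed.
Lemma vs_card2 a b : a < nV -> b < nV -> #|vs [:: a; b]| <= 2.
Proof.
move=> ha hb; have -> : vs [:: a; b] = [set o a; o b].
  by apply/setP => x; rewrite /vs !inE !eq_o.
by rewrite cards2 ltnS leq_b1.
Qed.

Ltac vsb := rewrite /vs; by [].

Lemma lt9 v : v < 9 -> v < nV. Proof. rewrite /nV; lia. Qed.

Lemma eps2 : EPS2 eG (k.+3).
Proof.
split.
- exists (ftab tbA) => i; split => hh.
    have hi : (i : nat) = 0 by apply/eqP.
    rewrite (@part0_eq _ _ [:: 6; 7; 3; 4]) //.
    exists (vs [:: 6; 7]), (vs [:: 3; 4]); split.
    + by rewrite -vs_U.
    + exact: vs_disj.
    + split; [exact: vs_stable | exact: vs_card2].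
    + exact: vs_clique.
    + move=> x y hx hy; apply/negbT; exact: (vs_cross _ hx hy).
  case: (ord3 i) => hi; try (exfalso; lia); tabt hi.
- exists (ftab tbB) => i; split => hh.
    have hi : (i : nat) = 0 by apply/eqP.
    rewrite (@part0_eq _ _ [:: 5; 6; 3; 4]) //.
    exists (vs [:: 5; 6]), (vs [:: 3; 4]); split.
    + by rewrite -vs_U.
    + exact: vs_disj.
    + split; [exact: vs_clique | exact: vs_card2].
    + exact: vs_clique.
    + move=> x y hx hy; apply/negbT; exact: (vs_cross _ hx hy).
  case: (ord3 i) => hi; try (exfalso; lia); tabt hi.
- exists (ftab tbC) => i; split => hh.
    have hi : (i : nat) = 0 by apply/eqP.
    rewrite (@part0_eq _ _ [:: 7; 8; 2]) //.
    exists (vs [:: 7; 8]), (vs [:: 2]); split.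
    + by rewrite -vs_U.
    + exact: vs_disj.
    + split; [exact: vs_stable | exact: vs_card2].
    + exact: vs_clique.
    + move=> x y hx hy; exact: (vs_cross _ hx hy).
  case: (ord3 i) => hi; try (exfalso; lia); tabt hi.
- exists (ftab tbD) => i; split => hh.
    have hi : (i : nat) = 0 by apply/eqP.
    rewrite (@part0_eq _ _ [:: 0; 3; 4; 7]) //.
    right; exists (o 7); split.
    + by rewrite inE o_val.
    + have -> : vs [:: 0; 3; 4; 7] :\ o 7 = vs [:: 0; 3; 4].
        apply/setP => x; rewrite !inE eq_o //.
        by case: (val x) => [|[|[|[|[|[|[|[|v]]]]]]]].
      exact: vs_clique.
    + apply: (@leq_trans #|[set o 0]|); last by rewrite cards1.
      apply: subset_leq_card; apply/subsetP => x; rewrite !inE eq_o // => /andP[hx he].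
      move: hx he; rewrite /eG o_val //; case: x => v hv /=.
      by case: v hv => [|[|[|[|[|[|[|[|v]]]]]]]].
  case: (ord3 i) => hi; try (exfalso; lia); tabt hi.
Qed.

Definition Tset : {set 'I_nV} := [set v : 'I_nV | isT v].
Definition Xset : {set 'I_nV} := [set v : 'I_nV | isX v].

Lemma card_T : k.+2 <= #|Tset|.
Proof.
have inj : injective (fun i : 'I_(k.+2) => o (7 + i)).
  move=> i j /(congr1 val); rewrite !o_val; [move=> h; apply: ord_inj; lia| |];
  rewrite /nV; [have := ltn_ord j | have := ltn_ord i]; lia.
have := card_imset (mem [set: 'I_(k.+2)]) inj; rewrite cardsT card_ord => <-.
apply: subset_leq_card; apply/subsetP => x /imsetP[i _ ->]; rewrite inE /isT o_val.
  have := ltn_ord i; lia.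
rewrite /nV; have := ltn_ord i; lia.
Qed.

Lemma card_X : k <= #|Xset|.
Proof.
have inj : injective (fun i : 'I_k => o (9 + k + i)).
  move=> i j /(congr1 val); rewrite !o_val; [move=> h; apply: ord_inj; lia| |];
  rewrite /nV -addnn; [have := ltn_ord j | have := ltn_ord i]; lia.
have := card_imset (mem [set: 'I_k]) inj; rewrite cardsT card_ord => <-.
apply: subset_leq_card; apply/subsetP => x /imsetP[i _ ->]; rewrite inE /isX o_val.
  lia.
rewrite /nV -addnn; have := ltn_ord i; lia.
Qed.

Lemma mem2T a b (x : 'I_nV) : a < nV -> b < nV ->
  (x \in o a |: (o b |: Tset)) = (val x \in [:: a; b]) || isT x.
Proof. by move=> ha hb; rewrite !inE !eq_o // orbA. Qed.
Lemma mem3X a b c (x : 'I_nV) : a < nV -> b < nV -> c < nV ->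
  (x \in o a |: (o b |: (o c |: Xset))) = (val x \in [:: a; b; c]) || isX x.
Proof. by move=> ha hb hc; rewrite !inE !eq_o // !orbA. Qed.

Lemma card2T a b : a < 7 -> b < 7 -> a != b -> k.+4 <= #|o a |: (o b |: Tset)|.
Proof.
move=> ha hb hab; have ha' : a < nV by rewrite /nV; lia.
have hb' : b < nV by rewrite /nV; lia.
rewrite !cardsU1 /Tset !inE !eq_o // ?o_val ?o_nat //.
have -> : isT b = false by rewrite /isT; lia. have -> : isT a = false by rewrite /isT; lia.
rewrite (negbTE hab) /= !add1n !ltnS; exact: card_T.
Qed.

Lemma card3X a b c : a < 7 -> b < 7 -> c < 7 -> uniq [:: a; b; c] ->
  k.+3 <= #|o a |: (o b |: (o c |: Xset))|.
Proof.
move=> ha hb hc hu; have ha' : a < nV by rewrite /nV; lia.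
have hb' : b < nV by rewrite /nV; lia.
have hc' : c < nV by rewrite /nV; lia.
rewrite !cardsU1 /Xset !inE !eq_o // ?o_val ?o_nat //.
have -> : isX a = false by rewrite /isX; lia. have -> : isX b = false by rewrite /isX; lia.
have -> : isX c = false by rewrite /isX; lia.
move: hu; rewrite /= !inE !negb_or => /andP[/andP[h1 h2] /andP[h3 _]].
rewrite (negbTE h1) (negbTE h2) (negbTE h3) /= !add1n !ltnS; exact: card_X.
Qed.

Lemma stab_gen (s : seq nat) (Q : nat -> bool) :
  (forall a b, a \in s -> b \in s -> ~~ E a b) ->
  (forall a b, a \in s -> Q b -> ~~ E a b) ->
  (forall a b, Q a -> Q b -> ~~ E a b) ->
  stableS eG [set x : 'I_nV | (val x \in s) || Q x].
Proof.
move=> h1 h2 h3 x y; rewrite !inE /eG => /orP[hx|hx] /orP[hy|hy].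
- exact: h1.
- exact: h2.
- rewrite E_sym; exact: h2.
- exact: h3.
Qed.

Lemma stab2T a b : a < 7 -> b < 7 -> 3 <= a -> 3 <= b -> ~~ E a b ->
  stableS eG (o a |: (o b |: Tset)).
Proof.
move=> ha hb ha3 hb3 hab.
have -> : o a |: (o b |: Tset) = [set x : 'I_nV | (val x \in [:: a; b]) || isT x].
  by apply/setP => x; rewrite mem2T ?inE //; rewrite /nV; lia.
apply: stab_gen.
- move=> u w; rewrite !inE => /orP[]/eqP-> /orP[]/eqP->; by rewrite ?E_irr // E_sym.
- move=> u w hu hw; rewrite E_bT //.
    by move: hu; rewrite !inE => /orP[]/eqP->; lia.
  by move: hu; rewrite !inE => /orP[]/eqP->; lia.
- by move=> u w hu hw; rewrite E_TT.
Qed.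

Lemma stab3X a b c : a < 7 -> b < 7 -> c < 7 ->
  all (fun u => all (fun w => ~~ E u w) [:: a; b; c]) [:: a; b; c] ->
  stableS eG (o a |: (o b |: (o c |: Xset))).
Proof.
move=> ha hb hc hall.
have -> : o a |: (o b |: (o c |: Xset)) = [set x : 'I_nV | (val x \in [:: a; b; c]) || isX x].
  by apply/setP => x; rewrite mem3X ?inE //; rewrite /nV; lia.
apply: stab_gen.
- move=> u w hu hw; exact: (allP (allP hall _ hu) _ hw).
- move=> u w hu hw; rewrite E_bX //.
  by move: hu; rewrite !inE => /or3P[]/eqP->.
- by move=> u w hu hw; rewrite E_XX.
Qed.

Lemma eps3 : EPS3 eG (k.+3).
Proof.
move=> [f H].
pose P := part f ord0.
have Hc : forall i : 'I_(k.+3), 0 < i -> cliqueS eG (part f i) by move=> i hi; case: (H i) => _; apply.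
have HP : cliqueS eG P \/ co_star eG P by case: (H ord0) => h _; exact: h.
have inP : forall x, (x \in P) = (f x == ord0) by move=> x; rewrite inE.
have pig0 : forall U, stableS eG U -> (forall x, x \in U -> x \notin P) -> #|U| <= k.+2.
  move=> U hU hP.
  have inj : {in U &, injective f}.
    move=> x y hx hy hf; case: (eqVneq x y) => // hne; exfalso.
    have hfx : 0 < f x by rewrite lt0n; have := hP x hx; rewrite inP.
    have := Hc (f x) hfx x y; rewrite !inE hf eqxx => /(_ erefl erefl hne) he.
    by move: (hU x y hx hy); rewrite he.
  rewrite -(card_in_imset inj).
  apply: (@leq_trans #|[set~ (ord0 : 'I_(k.+3))]|); last by rewrite cardsC1 card_ord.
  apply: subset_leq_card; apply/subsetP => i /imsetP[x hx ->]; rewrite !inE.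
  by have := hP x hx; rewrite inP.
have pig1 : forall U, stableS eG U ->
    (forall x y, x \in U -> y \in U -> x \in P -> y \in P -> x = y) -> #|U| <= k.+3.
  move=> U hU h1.
  case: (pickP [pred x | (x \in U) && (x \in P)]) => [w /andP[hwU hwP] | hn].
    rewrite (cardsD1 w) hwU add1n ltnS; apply: pig0.
      by move=> x y; rewrite !inE => /andP[_ hx] /andP[_ hy]; exact: hU.
    move=> x; rewrite !inE => /andP[hxw hx]; apply/negP => hxP.
    by rewrite -inP in hxP; rewrite (h1 x w hx hwU hxP hwP) eqxx in hxw.
  apply: leqW; apply: pig0 => // x hx; apply/negP => hxP.
  by have := hn x; rewrite /= hx hxP.
have F1s : stableS eG (o 3 |: (o 6 |: Tset)) by apply: stab2T.
have F4s : stableS eG (o 4 |: (o 5 |: Tset)) by apply: stab2T.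
have F1c := @card2T 3 6 erefl erefl erefl.
have F4c := @card2T 4 5 erefl erefl erefl.
case: HP => [hcl | [v [hvP hvcl hvn]]].
  have hh : forall x y, x \in o 3 |: (o 6 |: Tset) -> y \in o 3 |: (o 6 |: Tset) ->
      x \in P -> y \in P -> x = y.
    move=> x y hx hy hxP hyP; case: (eqVneq x y) => // hne; exfalso.
    by move: (F1s x y hx hy); rewrite (hcl x y hxP hyP hne).
  by have := pig1 _ F1s hh; rewrite leqNgt F1c.
have gen : forall U, stableS eG U -> v \notin U ->
    forall x y, x \in U -> y \in U -> x \in P -> y \in P -> x = y.
  move=> U hU hvU x y hx hy hxP hyP; case: (eqVneq x y) => // hne; exfalso.
  have hxv : x != v by apply/eqP => e; rewrite -e hx in hvU.
  have hyv : y != v by apply/eqP => e; rewrite -e hy in hvU.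
  have hx' : x \in P :\ v by rewrite in_setD1 hxv hxP.
  have hy' : y \in P :\ v by rewrite in_setD1 hyv hyP.
  have he := hvcl x y hx' hy' hne.
  by move: (hU x y hx hy); rewrite he.
have hv1 : v \in o 3 |: (o 6 |: Tset).
  apply/negPn/negP => hn; have := pig1 _ F1s (gen _ F1s hn).
  by rewrite leqNgt F1c.
have hv4 : v \in o 4 |: (o 5 |: Tset).
  apply/negPn/negP => hn; have := pig1 _ F4s (gen _ F4s hn).
  by rewrite leqNgt F4c.
have hvT : isT v.
  move: hv1 hv4; rewrite !mem2T ?lt9 // !inE.
  by case: (isT v); rewrite ?orbT ?orbF //; case/orP => /eqP -> /orP[]/eqP.
have notP : forall y : 'I_nV, (y < 3) || isX y -> y \notin P.
  move=> y hy; apply/negP => hyP; have := hvn y hyP; rewrite /eG.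
  case/orP: hy => hy.
    by rewrite E_sym E_bT // ?hy //; lia.
  by rewrite E_TX.
have G1s : stableS eG (o 0 |: (o 2 |: (o 6 |: Xset))) by apply: stab3X.
have G2s : stableS eG (o 1 |: (o 2 |: (o 4 |: Xset))) by apply: stab3X.
have G1c := @card3X 0 2 6 erefl erefl erefl erefl.
have G2c := @card3X 1 2 4 erefl erefl erefl erefl.
case: (boolP (o 6 \in P)) => h6; last first.
  suff hh : forall x, x \in o 0 |: (o 2 |: (o 6 |: Xset)) -> x \notin P.
    by have := pig0 _ G1s hh; rewrite leqNgt G1c.
  move=> x; rewrite mem3X ?lt9 //; case/orP => [|hx]; last by apply: notP; rewrite hx orbT.
  rewrite !in_cons in_nil orbF => /or3P[]/eqP hx.
  - by apply: notP; rewrite /= hx.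
  - by apply: notP; rewrite /= hx.
  - have -> : x = o 6 by apply: val_inj; rewrite /= o_val.
    exact: h6.
case: (boolP (o 4 \in P)) => h4; last first.
  suff hh : forall x, x \in o 1 |: (o 2 |: (o 4 |: Xset)) -> x \notin P.
    by have := pig0 _ G2s hh; rewrite leqNgt G2c.
  move=> x; rewrite mem3X ?lt9 //; case/orP => [|hx]; last by apply: notP; rewrite hx orbT.
  rewrite !in_cons in_nil orbF => /or3P[]/eqP hx.
  - by apply: notP; rewrite /= hx.
  - by apply: notP; rewrite /= hx.
  - have -> : x = o 4 by apply: val_inj; rewrite /= o_val.
    exact: h4.
have h4v : o 4 != v by apply/eqP => e; move: hvT; rewrite -e /isT o_nat.
have h6v : o 6 != v by apply/eqP => e; move: hvT; rewrite -e /isT o_nat.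
have hx' : o 4 \in P :\ v by rewrite in_setD1 h4v h4.
have hy' : o 6 \in P :\ v by rewrite in_setD1 h6v h6.
have hne : o 4 != o 6 by rewrite eq_o ?o_val.
by have := hvcl _ _ hx' hy' hne; rewrite /eG !o_nat.
Qed.

End Constr.








Theorem theorem3p12 :
  forall N : nat, exists n : nat, N <= n /\
    exists e : rel 'I_n, simple_graph e /\ EPS_graph e.
Proof.
move=> N; exists (nV N); split; first by rewrite /nV -addnn; lia.
exists (@eG N); split; first exact: (@simple_eG N).
exists N.+3; split => //; [exact: (@eps1 N) | exact: (@eps2 N) | exact: (@eps3 N)].
Qed.
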